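(* For every sufficiently large $n$, there exists an instance of the MaxMinDegree Arborescence problem on a layered directed graph $G$ of depth $3$ with $\Theta(n)$ vertices, such that $k_u=n^{\Omega(1)}$ for every non-sink vertex $u$, and such that the integrality gap of $1$ round (level $1$) of the Sherali-Adams hierarchy applied to the assignment LP is at least $n^{\Omega(1)}$.
   Context: MaxMinDegree Arborescence (MMDA) on layered graphs: a layered directed graph $G=(V,E)$ of depth $\ell$ has vertex set $V=L_0\dot\cup L_1\dot\cup\cdots\dot\cup L_\ell$, every edge goes from some $L_i$ to $L_{i+1}$, $L_0=\{s\}$ where $s$ is the source, and the vertices of $L_\ell$ are the sinks. Every non-sink vertex $u$ has a required out-degree $k_u>0$. For $\alpha\ge 1$, an $\alpha$-approximate integral solution is an edge set $T\subseteq E$ such that $|\delta^+_T(s)|\ge k_s/\alpha$, every vertex has in-degree at most $1$ in $T$, and every non-sink vertex $v\ne s$ with in-degree $1$ in $T$ satisfies $|\delta^+_T(v)|\ge k_v/\alpha$. The size $n$ of the instance is its number of vertices. The assignment LP has a variable $x_e$ for each $e\in E$ and constraints $x(\delta^+(s))\ge k_s$; $x(\delta^+(v))\ge k_v\, x(\delta^-(v))$ for every $v\notin\{s\}\cup L_\ell$; $x(\delta^-(v))\le 1$ for all $v$; $0\le x_e\le 1$. The level-$r$ Sherali-Adams relaxation of an LP $\{x\in[0,1]^N: a^Tx\le b \text{ for each constraint}\}$ has variables $y_I$ for $I\subseteq[N]$, $|I|\le r+1$, with $y_\emptyset=1$, and for every constraint $a^Tx\le b$ of the LP (including the bounds $0\le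 x_i\le 1$) and all disjoint $V_0,V_1\subseteq[N]$ with $|V_0|+|V_1|\le r$ it requires $\sum_{W\subseteq V_0}(-1)^{|W|}\big(b\,y_{V_1\cup W}-\sum_i a_i\, y_{V_1\cup W\cup\{i\}}\big)\ge 0$ (the linearization of $\prod_{i\in V_1}x_i\prod_{i\in V_0}(1-x_i)(b-a^Tx)\ge 0$ using $x_i^2=x_i$); the projected solution is $x_i=y_{\{i\}}$. Integrality gap of a relaxation $R$ on an instance: $\alpha_{\mathrm{int}}/\alpha_R$, where $\alpha_{\mathrm{int}}$ is the smallest $\alpha$ for which an $\alpha$-approximate integral solution exists and $\alpha_R$ is the smallest $\alpha$ for which $R$ is feasible when every $k_u$ is replaced by $k_u/\alpha$. *)

(* Defs.v *)
From HB Require Import structures.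
From mathcomp Require Import all_boot all_order all_algebra.
From mathcomp Require Import reals.
Import Order.TTheory GRing.Theory Num.Theory.
Local Open Scope ring_scope.

Record mmda_inst := MMDA {
  nv : nat;
  layer : 'I_nv -> nat;
  adj : rel 'I_nv;
  src : 'I_nv;
  kreq : 'I_nv -> nat }.

Set Implicit Arguments. Unset Strict Implicit. Unset Printing Implicit Defensive.

(* The edge set E, as a finite type (the LP variables are indexed by it). *)
Definition edge (I : mmda_inst) : finType :=
  {p : 'I_(nv I) * 'I_(nv I) | adj I p.1 p.2}.

Definition etail I (e : edge I) : 'I_(nv I) := (val e).1.
Definition ehead I (e : edge I) : 'I_(nv I) := (val e).2.

Definition layered (I : mmda_inst) (l : nat) : Prop :=
  [/\ layer I (src I) = 0%N /\
      (forall v, layer I v = 0%N -> v = src I),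
      (forall v, (layer I v <= l)%N),
      (forall i, (i <= l)%N -> exists v, layer I v = i),
      (forall u v, adj I u v -> layer I v = (layer I u).+1)
    & (forall u, (layer I u < l)%N -> (0 < kreq I u)%N)].

Section Defs.
Variable R : realFieldType.
Variable I : mmda_inst.
Variable l : nat.  (* depth; sinks are the vertices of layer l *)

Definition outT (T : {set edge I}) (v : 'I_(nv I)) := [set e in T | etail e == v].
Definition inT (T : {set edge I}) (v : 'I_(nv I)) := [set e in T | ehead e == v].

Definition int_sol (alpha : R) (T : {set edge I}) : Prop :=
  [/\ (kreq I (src I))%:R / alpha <= #|outT T (src I)|%:R,
      (forall v, (#|inT T v| <= 1)%N)
    & (forall v, v != src I -> layer I v != l -> #|inT T v| = 1%N ->
         (kreq I v)%:R / alpha <= #|outT T v|%:R)].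

(* Level-r Sherali-Adams constraints derived from one LP constraint a^T x <= b,
   for y : {set E} -> R (only values on sets of size <= r+1 are ever used). *)
Definition sa_constraint (E : finType) (r : nat) (y : {set E} -> R)
    (a : E -> R) (b : R) : Prop :=
  forall V0 V1 : {set E}, [disjoint V0 & V1] -> (#|V0| + #|V1| <= r)%N ->
    0 <= \sum_(W in powerset V0)
           (-1) ^+ #|W| * (b * y (V1 :|: W)
                           - \sum_(i : E) a i * y (V1 :|: W :|: [set i])).

Definition ind (b : bool) : R := if b then 1 else 0.

(* Level-r Sherali-Adams relaxation of the assignment LP with every k_u
   replaced by k_u / alpha; all LP constraints written as a^T x <= b:
   - source:   - x(delta^+(s)) <= - k_s/alpha
   - flow:     (k_v/alpha) x(delta^-(v)) - x(delta^+(v)) <= 0,  v notin {s} u L_l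
   - in-deg:   x(delta^-(v)) <= 1  for all v
   - bounds:   - x_e <= 0,  x_e <= 1. *)
Definition sa_feasible (r : nat) (alpha : R) : Prop :=
  exists y : {set edge I} -> R,
  [/\ y set0 = 1 /\
      sa_constraint r y (fun e => - ind (etail e == src I))
                        (- ((kreq I (src I))%:R / alpha)),
      (forall v, v != src I -> layer I v != l ->
         sa_constraint r y
           (fun e => (kreq I v)%:R / alpha * ind (ehead e == v)
                     - ind (etail e == v)) 0),
      (forall v, sa_constraint r y (fun e => ind (ehead e == v)) 1),
      (forall e0, sa_constraint r y (fun e => - ind (e == e0)) 0)
    & (forall e0, sa_constraint r y (fun e => ind (e == e0)) 1)].

End Defs.

Arguments int_sol {R} I l alpha T.
Arguments sa_feasible {R} I l r alpha.

(* Main.v *)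
Require Import Defs.
From HB Require Import structures.
From mathcomp Require Import all_boot all_order all_algebra.
From mathcomp Require Import reals.
From mathcomp Require Import ring lra zify.
Import Order.TTheory GRing.Theory Num.Theory.
Local Open Scope ring_scope.

Set Implicit Arguments. Unset Strict Implicit. Unset Printing Implicit Defensive.

Section SA1.
Variable R : realFieldType.
Variable E : finType.
Variables (x : E -> R) (w : E -> E -> R).
Hypothesis wsym : forall i j, w i j = w j i.
Hypothesis wdiag : forall i, w i i = x i.

Definition ysa (S : {set E}) : R :=
  match enum S with [::] => 1 | [:: i] => x i | [:: i; j] => w i j | _ => 0 end.

Lemma ysa0 : ysa set0 = 1.
Proof. by rewrite /ysa enum_set0. Qed.

Lemma ysa1 j : ysa [set j] = x j.
Proof. by rewrite /ysa enum_set1. Qed.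

Lemma ysa2 j i : ysa ([set j] :|: [set i]) = w j i.
Proof.
have [->|nij] := eqVneq i j; first by rewrite setUid ysa1 wdiag.
have hc : size (enum ([set j] :|: [set i])) = 2%N.
  by rewrite -cardE cards2 eq_sym nij.
have hu := enum_uniq (mem ([set j] :|: [set i])).
have hm : forall z, (z \in enum ([set j] :|: [set i])) = (z == j) || (z == i).
  by move=> z; rewrite mem_enum !inE.
rewrite /ysa; move: hc hu hm.
case: (enum _) => [|u [|v [|? ?]]] //= _.
rewrite inE andbT => nuv hm.
have := hm u; have := hm v; rewrite !inE !eqxx /= orbT => hv hu'.
move: (esym hv) (esym hu') => {hv hu'}.
case/orP=> /eqP ev; case/orP=> /eqP eu; subst => //; try by rewrite ?eqxx in nuv.
Qed.

Lemma sa1 (a : E -> R) (b : R) :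
  0 <= b - \sum_i a i * x i ->
  (forall j, 0 <= b * x j - \sum_i a i * w j i) ->
  (forall j, 0 <= (b - \sum_i a i * x i) - (b * x j - \sum_i a i * w j i)) ->
  sa_constraint 1 ysa a b.
Proof.
move=> H0 H1 H2 V0 V1 dis hc.
have [c0|c0] := eqVneq #|V0| 0%N.
- rewrite (cards0_eq c0) powerset0 big_set1 cards0 expr0 mul1r.
  have : (#|V1| <= 1)%N by rewrite c0 in hc.
  rewrite leq_eqVlt ltnS leqn0; case/orP=> [/cards1P [j ->]|/eqP/cards0_eq ->].
  + rewrite setU0 ysa1.
    under eq_bigr => i _ do rewrite ysa2.
    exact: H1.
  + rewrite setU0 ysa0 mulr1.
    under eq_bigr => i _ do rewrite set0U ysa1.
    exact: H0.
- have c1 : #|V0| = 1%N.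
    by apply/eqP; rewrite eqn_leq (leq_trans (leq_addr _ _) hc) lt0n c0.
  have : #|V1| = 0%N by move: hc; rewrite c1 add1n ltnS leqn0 => /eqP.
  move/cards0_eq => ->; move/eqP/cards1P: c1 => [j ->].
  rewrite powerset1 big_setU1 /=; last first.
    by rewrite inE eq_sym; apply/negP => /eqP/setP/(_ j); rewrite !inE eqxx.
  rewrite big_set1 cards0 cards1 expr0 expr1 mul1r.
  rewrite ?set0U ?setU0 ysa0 ysa1 mulr1.
under eq_bigr => i _ do rewrite set0U ysa1.
under [X in _ + _ * (_ - X)]eq_bigr => i _ do rewrite ysa2.
by rewrite mulN1r.
Qed.

End SA1.


Section Inst.
Variables (k' pad : nat).
Definition KK := k'.+2.
Definition NA := (k'.+4 * k'.+4)%N.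
Definition MM := (KK * KK + KK)%N.
Local Notation A := 'I_NA.
Local Notation Mi := 'I_MM.
Local Notation Ki := 'I_KK.
Local Notation V := ((unit + A) + ((A * Mi) + ((A * Mi) + ((A * Ki) + 'I_pad))))%type.

Inductive vkind := KS | KA of A | KB of A & Mi | KP of A & Mi | KX of A & Ki | KPad.

Definition kind (v : V) : vkind :=
  match v with
  | inl (inl _) => KS
  | inl (inr a) => KA a
  | inr (inl (a, i)) => KB a i
  | inr (inr (inl (a, i))) => KP a i
  | inr (inr (inr (inl (a, k)))) => KX a k
  | _ => KPad
  end.

Definition vS : V := inl (inl tt).
Definition vA a : V := inl (inr a).
Definition vB a i : V := inr (inl (a, i)).
Definition vP a i : V := inr (inr (inl (a, i))).
Definition vX a k : V := inr (inr (inr (inl (a, k)))).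

Definition adjV (p q : V) : bool :=
  match kind p, kind q with
  | KS, KA _ => true
  | KA a, KB a' _ => a == a'
  | KB a i, KP a' i' => (a == a') && (i == i')
  | KB a _, KX a' _ => a == a'
  | _, _ => false
  end.

Variable R : realFieldType.

Lemma sum_pair (I J : finType) (F : I * J -> R) :
  \sum_p F p = \sum_i \sum_j F (i, j).
Proof. by rewrite pair_big; apply: eq_bigr => -[]. Qed.

Lemma sum_unit (F : unit -> R) : \sum_u F u = F tt.
Proof. by rewrite (big_pred1 tt) // => -[]. Qed.

Lemma sumV (F : V -> R) : \sum_v F v =
  F vS + \sum_a F (vA a) + \sum_a \sum_i F (vB a i) + \sum_a \sum_i F (vP a i)
  + \sum_a \sum_k F (vX a k) + \sum_i F (inr (inr (inr (inr i)))).
Proof.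
by rewrite !big_sumType sum_unit !sum_pair /= !addrA.
Qed.

Lemma sum_sel1 (I J : finType) (a : I) (G : I -> J -> R) :
  \sum_a' \sum_j (if a == a' then G a' j else 0) = \sum_j G a j.
Proof.
rewrite (bigD1 a) //= [X in _ + X]big1 ?addr0; last first.
  by move=> a' na; apply: big1 => j _; rewrite eq_sym (negbTE na).
by apply: eq_bigr => j _; rewrite eqxx.
Qed.

Lemma sum_sel2 (I J : finType) (a : I) (G : I -> J -> R) :
  \sum_a' \sum_j (if a' == a then G a' j else 0) = \sum_j G a j.
Proof.
rewrite -(sum_sel1 a G); apply: eq_bigr => a' _; apply: eq_bigr => j _.
by rewrite eq_sym.
Qed.

Lemma sum_sel11 (I J : finType) (a : I) (i : J) (G : I -> J -> R) :
  \sum_a' \sum_j (if (a == a') && (i == j) then G a' j else 0) = G a i.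
Proof.
rewrite (bigD1 a) //= [X in _ + X]big1 ?addr0; last first.
  by move=> a' na; apply: big1 => j _; rewrite eq_sym (negbTE na).
rewrite (bigD1 i) //= big1 ?addr0 ?eqxx //.
by move=> j nj; rewrite /= eq_sym (negbTE nj).
Qed.

Lemma sum_sel11' (I J : finType) (a : I) (i : J) (G : I -> J -> R) :
  \sum_a' \sum_j (if (a' == a) && (j == i) then G a' j else 0) = G a i.
Proof.
rewrite -(sum_sel11 a i G); apply: eq_bigr => a' _; apply: eq_bigr => j _.
by rewrite (eq_sym a') (eq_sym j).
Qed.

Lemma sum_sel0 (I : finType) (a : I) (G : I -> R) :
  \sum_a' (if a' == a then G a' else 0) = G a.
Proof. by rewrite -big_mkcond big_pred1_eq. Qed.

Lemma sum_sel0' (I : finType) (a : I) (G : I -> R) :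
  \sum_a' (if a == a' then G a' else 0) = G a.
Proof. by rewrite -(sum_sel0 a G); apply: eq_bigr => a' _; rewrite eq_sym. Qed.

Ltac nbsimp := rewrite big_mkcond sumV /adjV /= ?big1_eq ?add0r ?addr0 ?sum_sel0 ?sum_sel0' ?sum_sel11 ?sum_sel11' ?sum_sel1 ?sum_sel2.

Lemma in_S (H : V -> R) : \sum_(p | adjV p vS) H p = 0.
Proof. by nbsimp. Qed.
Lemma in_A a (H : V -> R) : \sum_(p | adjV p (vA a)) H p = H vS.
Proof. by nbsimp. Qed.
Lemma in_B a i (H : V -> R) : \sum_(p | adjV p (vB a i)) H p = H (vA a).
Proof. by nbsimp. Qed.
Lemma in_P a i (H : V -> R) : \sum_(p | adjV p (vP a i)) H p = H (vB a i).
Proof. by nbsimp. Qed.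
Lemma in_X a k (H : V -> R) : \sum_(p | adjV p (vX a k)) H p = \sum_i H (vB a i).
Proof. by nbsimp. Qed.
Lemma in_Pad i (H : V -> R) : \sum_(p | adjV p (inr (inr (inr (inr i))))) H p = 0.
Proof. by nbsimp. Qed.
Lemma out_S (H : V -> R) : \sum_(q | adjV vS q) H q = \sum_a H (vA a).
Proof. by nbsimp. Qed.
Lemma out_A a (H : V -> R) : \sum_(q | adjV (vA a) q) H q = \sum_i H (vB a i).
Proof. by nbsimp. Qed.
Lemma out_B a i (H : V -> R) :
  \sum_(q | adjV (vB a i) q) H q = H (vP a i) + \sum_k H (vX a k).
Proof. by nbsimp. Qed.

Definition layerV (v : V) : nat :=
  match kind v with KS => 0 | KA _ => 1 | KB _ _ => 2 | _ => 3 end.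

Definition ev (u : 'I_#|{: V}|) : V := enum_val u.

Definition inst : mmda_inst :=
  MMDA #|{: V}| (fun u : 'I_#|{: V}| => layerV (ev u)) (fun u v => adjV (ev u) (ev v))
       (enum_rank vS) (fun _ => KK).

Lemma sum_ev (f : V -> R) : \sum_(u : 'I_#|{: V}|) f (ev u) = \sum_p f p.
Proof.
by rewrite (reindex ev) //; apply: onW_bij; exact: enum_val_bij.
Qed.

Lemma sum_edges (G : V -> V -> R) :
  \sum_(e : edge inst) G (ev (etail e)) (ev (ehead e)) =
  \sum_p \sum_(q | adjV p q) G p q.
Proof.
pose F (u : 'I_#|{: V}| * 'I_#|{: V}|) := G (ev u.1) (ev u.2).
have -> : \sum_(e : edge inst) G (ev (etail e)) (ev (ehead e)) = \sum_(e : edge inst) F (val e) by [].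
rewrite -(big_imset _ (in2W val_inj)) /=.
rewrite (eq_bigl (fun u : 'I_#|{: V}| * 'I_#|{: V}| => adjV (ev u.1) (ev u.2))); last first.
  move=> u; apply/imsetP/idP => [[e _ ->]|h]; first exact: (valP e).
  by exists (exist _ u h).
rewrite -(pair_big_dep xpredT (fun u1 u2 => adjV (ev u1) (ev u2)) (fun u1 u2 => F (u1, u2))) /=.
rewrite -sum_ev; apply: eq_bigr => u1 _.
rewrite big_mkcond [RHS]big_mkcond -sum_ev /=.
by [].
Qed.

Lemma ev_inj : injective ev.
Proof. exact: enum_val_inj. Qed.

Lemma sum_in (v : 'I_#|{: V}|) (f : V -> V -> R) :
  \sum_(e : edge inst) ind R (ehead e == v) * f (ev (etail e)) (ev (ehead e)) =
  \sum_(p | adjV p (ev v)) f p (ev v).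
Proof.
have -> : \sum_(e : edge inst) ind R (ehead e == v) * f (ev (etail e)) (ev (ehead e)) =
  \sum_(e : edge inst) (fun p q => ind R (q == ev v) * f p q) (ev (etail e)) (ev (ehead e)).
  by apply: eq_bigr => e _; rewrite /= (inj_eq ev_inj).
rewrite (sum_edges (fun p q => ind R (q == ev v) * f p q)) [RHS]big_mkcond; apply: eq_bigr => p _.
rewrite big_mkcond (bigD1 (ev v)) //= big1 ?addr0.
  by case: (adjV p (ev v)); rewrite /ind ?eqxx ?mul1r.
by move=> q /negbTE nq; rewrite nq; case: (adjV p q); rewrite /ind ?mul0r.
Qed.

Lemma sum_out (v : 'I_#|{: V}|) (f : V -> V -> R) :
  \sum_(e : edge inst) ind R (etail e == v) * f (ev (etail e)) (ev (ehead e)) =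
  \sum_(q | adjV (ev v) q) f (ev v) q.
Proof.
have -> : \sum_(e : edge inst) ind R (etail e == v) * f (ev (etail e)) (ev (ehead e)) =
  \sum_(e : edge inst) (fun p q => ind R (p == ev v) * f p q) (ev (etail e)) (ev (ehead e)).
  by apply: eq_bigr => e _; rewrite /= (inj_eq ev_inj).
rewrite (sum_edges (fun p q => ind R (p == ev v) * f p q)) (bigD1 (ev v)) //= [X in _ + X]big1 ?addr0.
  by apply: eq_bigr => q _; rewrite /ind eqxx mul1r.
by move=> p /negbTE np; apply: big1 => q _; rewrite /ind np mul0r.
Qed.

Inductive lcode := LS | LA of Mi | LP of Mi | LX of Mi & Ki.

Lemma NA_gt0 : (0 < NA)%N. Proof. by rewrite /NA muln_gt0. Qed.
Lemma MM_gt0 : (0 < MM)%N. Proof. by rewrite /MM addn_gt0 orbT. Qed.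
Definition a0 : A := Ordinal NA_gt0.
Definition i0 : Mi := Ordinal MM_gt0.

Definition bidx (p : V) : Mi := match kind p with KB _ i => i | _ => i0 end.

Definition ecode (p q : V) : A * lcode :=
  match kind q with
  | KA a => (a, LS)
  | KB a i => (a, LA i)
  | KP a i => (a, LP i)
  | KX a k => (a, LX (bidx p) k)
  | _ => (a0, LS)
  end.

Definition codeE (e : edge inst) := ecode (ev (etail e)) (ev (ehead e)).

Definition inZ (Z : A * lcode -> R) (w : V) : R :=
  match kind w with
  | KA a => Z (a, LS)
  | KB a i => Z (a, LA i)
  | KP a i => Z (a, LP i)
  | KX a k => \sum_i Z (a, LX i k)
  | _ => 0
  end.

Definition outZ (Z : A * lcode -> R) (w : V) : R :=
  match kind w with
  | KS => \sum_a Z (a, LS)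
  | KA a => \sum_i Z (a, LA i)
  | KB a i => Z (a, LP i) + \sum_k Z (a, LX i k)
  | _ => 0
  end.

Lemma sum_inZ v (Z : A * lcode -> R) :
  \sum_(e : edge inst) ind R (ehead e == v) * Z (codeE e) = inZ Z (ev v).
Proof.
rewrite /codeE (sum_in v (fun p q => Z (ecode p q))).
move: (ev v) => w.
case: w => [[[]|a]|[[a i]|[[a i]|[[a k]|i]]]].
- exact: in_S.
- exact: in_A.
- exact: in_B.
- exact: in_P.
- exact: in_X.
- exact: in_Pad.
Qed.

Lemma sum_outZ v (Z : A * lcode -> R) :
  \sum_(e : edge inst) ind R (etail e == v) * Z (codeE e) = outZ Z (ev v).
Proof.
rewrite /codeE (sum_out v (fun p q => Z (ecode p q))).
move: (ev v) => w.
case: w => [[[]|a]|[[a i]|[[a i]|[[a k]|i]]]].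
- exact: out_S.
- exact: out_A.
- exact: out_B.
- by rewrite /outZ /=; nbsimp.
- by rewrite /outZ /=; nbsimp.
- by rewrite /outZ /=; nbsimp.
Qed.

Definition kr : R := KK%:R.
Definition th : R := (k'.+4)%:R^-1.

Definition xl (l : lcode) : R :=
  match l with LS => th | LA _ => th / kr | LP _ => th | LX _ _ => th / kr end.

Definition loc (lj le : lcode) : R :=
  match lj, le with
  | LS, LS => 1 | LS, LA _ => 1 / kr | LS, LP _ => 1 | LS, LX _ _ => 0
  | LP _, LS => 1 | LP _, LA _ => 1 / kr | LP _, LP _ => 1 | LP _, LX _ _ => 0
  | LA _, LS => 1 | LA i, LA i' => if i' == i then 1 else 1 / kr
  | LA _, LP _ => 1 | LA i, LX i' _ => if i' == i then 1 else 0
  | LX _ _, LS => 0 | LX i _, LA i' => if i' == i then 1 else 0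
  | LX _ _, LP _ => 0 | LX i _, LX i' _ => if i' == i then 1 else 0
  end.

Definition Xc (cj ce : A * lcode) : R :=
  if cj.1 == ce.1 then loc cj.2 ce.2 else xl ce.2.

Definition xE (e : edge inst) : R := xl (codeE e).2.
Definition wE (j e : edge inst) : R := xE j * Xc (codeE j) (codeE e).

Lemma kr_ge2 : 2 <= kr.
Proof. by rewrite /kr ler_nat. Qed.

Lemma th_gt0 : 0 < th.
Proof. by rewrite /th invr_gt0 ltr0n. Qed.

Lemma thE : th * (kr + 2) = 1.
Proof.
rewrite /th /kr -natrD /KK addn2 mulVf //.
by rewrite pnatr_eq0.
Qed.

Lemma Xc_sym cj ce : xl cj.2 * Xc cj ce = xl ce.2 * Xc ce cj.
Proof.
case: cj => a lj; case: ce => b le; rewrite /Xc /= (eq_sym b).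
case: (a == b); last by rewrite mulrC.
case: lj => [|i|i|i k]; case: le => [|i'|i'|i' k2] //=;
  rewrite ?(eq_sym i i'); try case: (i' == i); rewrite /= ?mulr1 ?mul1r ?mulr0 ?mul0r ?div1r //.
Qed.

Lemma kr_gt0 : 0 < kr.
Proof. by have := kr_ge2; lra. Qed.

Lemma th_le : th <= 1/4.
Proof. have := thE; have := kr_ge2; have := th_gt0; nra. Qed.

Lemma thk_le : th / kr <= th.
Proof.
have hk := kr_ge2; have ht := th_gt0.
have e : th / kr * kr = th by rewrite divfK // gt_eqF // kr_gt0.
have : 0 <= th / kr by rewrite divr_ge0 // ltW // kr_gt0.
nra.
Qed.

Lemma thk_ge0 : 0 <= th / kr.
Proof. by rewrite divr_ge0 // ltW ?kr_gt0 ?th_gt0. Qed.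

Lemma ik_ge0 : 0 <= 1 / kr.
Proof. by rewrite divr_ge0 // ltW ?kr_gt0. Qed.

Lemma ik_le1 : 1 / kr <= 1.
Proof. by rewrite ler_pdivrMr ?kr_gt0 // mul1r; have := kr_ge2; lra. Qed.

Lemma xl_ge0 l : 0 <= xl l.
Proof. by case: l => *; rewrite /xl ?thk_ge0 // ltW // th_gt0. Qed.

Lemma xl_le l : xl l <= th.
Proof. by case: l => *; rewrite /xl ?thk_le. Qed.

Lemma xl_le1 l : xl l <= 1.
Proof. by have := xl_le l; have := th_le; lra. Qed.

Lemma loc_ge0 lj le : 0 <= loc lj le.
Proof.
by case: lj => *; case: le => * /=; try case: ifP => _; rewrite ?ik_ge0 ?ler01.
Qed.

Lemma loc_le1 lj le : loc lj le <= 1.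
Proof.
by case: lj => *; case: le => * /=; try case: ifP => _; rewrite ?ik_le1 ?ler01.
Qed.

Lemma Xc_ge0 cj ce : 0 <= Xc cj ce.
Proof. by rewrite /Xc; case: ifP => _; rewrite ?loc_ge0 ?xl_ge0. Qed.

Lemma Xc_le1 cj ce : Xc cj ce <= 1.
Proof. by rewrite /Xc; case: ifP => _; rewrite ?loc_le1 ?xl_le1. Qed.

Lemma Xc_dec cj a l : Xc cj (a, l) = xl l + (if cj.1 == a then loc cj.2 l - xl l else 0).
Proof. by rewrite /Xc /=; case: ifP => _; rewrite ?addr0 // addrC subrK. Qed.

Lemma sum_cst (T : finType) (c : R) : \sum_(i : T) c = #|T|%:R * c.
Proof. by rewrite sumr_const mulr_natl. Qed.

Lemma sum_ifc (T : finType) (i0 : T) (c d : R) :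
  \sum_i (if i == i0 then c else d) = (#|T|%:R - 1) * d + c.
Proof.
rewrite (eq_bigr (fun i => d + (if i == i0 then c - d else 0))); last first.
  by move=> i _; case: ifP => _; rewrite ?addr0 // addrC subrK.
by rewrite big_split /= sum_cst sum_sel0; ring.
Qed.

Lemma MMr : (MM%:R : R) = kr * kr + kr.
Proof. by rewrite /MM natrD natrM. Qed.

Lemma NAth : (NA%:R : R) * th = kr + 2.
Proof.
rewrite /NA natrM /th mulfK ?pnatr_eq0 // /kr /KK -natrD addn2 //.
Qed.

Lemma krV : kr^-1 * kr = 1.
Proof. by rewrite mulVf // gt_eqF // kr_gt0. Qed.

Lemma kr_neq0 : kr != 0.
Proof. by rewrite gt_eqF // kr_gt0. Qed.

Lemma MMk : (kr * kr + kr) / kr = kr + 1.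
Proof. by field; exact: kr_neq0. Qed.

Lemma MMk1 : (kr * kr + kr - 1) / kr = kr + 1 - kr^-1.
Proof. by field; exact: kr_neq0. Qed.

Local Notation Zx := (fun c : A * lcode => xl c.2).

Ltac facts := have := thE; have := kr_ge2; have := th_gt0; have := krV;
  have := kr_gt0; have : 0 < kr^-1 by rewrite invr_gt0 kr_gt0.

Lemma in_bounds cj w : 0 <= inZ (Xc cj) w <= 1.
Proof.
rewrite /inZ; case: (kind w) => *; rewrite ?Xc_ge0 ?Xc_le1 ?lexx ?ler01 //.
rewrite /Xc /=; case: eqP => _; last first.
  rewrite sum_cst card_ord MMr; facts.
  move=> *; apply/andP; split; nra.
case: cj.2 => [|i|i|i k0] /=; rewrite ?big1_eq ?lexx ?ler01 // sum_sel0 lexx ler01 //.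
Qed.

Lemma in_x w : inZ Zx w <= 1 - th.
Proof.
have := th_le; have := xl_le; have := thk_le.
rewrite /inZ; case: (kind w) => * /=; rewrite ?sum_cst ?card_ord ?MMr; try nra.
facts; move=> *; nra.
Qed.

Lemma flowA_x a : outZ Zx (vA a) - kr * inZ Zx (vA a) = th.
Proof.
rewrite /outZ /inZ /= sum_cst card_ord MMr; facts; move=> *; nra.
Qed.

Lemma flowA_j cj a : 0 <= outZ (Xc cj) (vA a) - kr * inZ (Xc cj) (vA a) /\ xl cj.2 * (outZ (Xc cj) (vA a) - kr * inZ (Xc cj) (vA a)) <= th.
Proof.
rewrite /outZ /inZ /= /Xc /=; case: eqP => _; last first.
  rewrite sum_cst card_ord MMr; facts; move=> *.
  have -> : (kr * kr + kr) * (th / kr) - kr * th = th by nra.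
  by have := xl_le1 cj.2; have := xl_ge0 cj.2; split; nra.
case: cj.2 => [|i|i|i k0] /=; rewrite ?sum_cst ?sum_ifc ?card_ord ?MMr ?div1r ?big1_eq ?MMk ?MMk1; facts;
  move=> *; split; nra.
Qed.

Lemma flowB_x a i : outZ Zx (vB a i) - kr * inZ Zx (vB a i) = th.
Proof.
rewrite /outZ /inZ /= sum_cst card_ord; facts; move=> *; nra.
Qed.

Lemma flowB_j cj a i : 0 <= outZ (Xc cj) (vB a i) - kr * inZ (Xc cj) (vB a i) /\ xl cj.2 * (outZ (Xc cj) (vB a i) - kr * inZ (Xc cj) (vB a i)) <= th.
Proof.
rewrite /outZ /inZ /= /Xc /=; case: eqP => _; last first.
  rewrite sum_cst card_ord; facts; move=> *.
  have -> : th + kr * (th / kr) - kr * (th / kr) = th by ring.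
  by have := xl_le1 cj.2; have := xl_ge0 cj.2; split; nra.
case: cj.2 => [|i0|i0|i0 k0] /=; rewrite ?sum_cst ?card_ord ?div1r ?big1_eq;
  try case: eqP => _; rewrite ?sum_cst ?card_ord -/kr ?(divff kr_neq0); facts; move=> *; split; nra.
Qed.

Lemma src_j cj : 2 - th <= outZ (Xc cj) vS - kr <= 3.
Proof.
rewrite /outZ /=.
rewrite (eq_bigr (fun a => th + (if a == cj.1 then loc cj.2 LS - th else 0))); last first.
  by move=> a _; rewrite Xc_dec /= (eq_sym cj.1).
rewrite big_split /= sum_cst sum_sel0 card_ord NAth.
have := loc_ge0 cj.2 LS; have := loc_le1 cj.2 LS; have := th_le; have := th_gt0.
move=> *; apply/andP; split; lra.
Qed.

Lemma src_x : outZ Zx vS - kr = 2.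
Proof. by rewrite /outZ /= sum_cst card_ord NAth; ring. Qed.

Lemma wE_sym j e : wE j e = wE e j.
Proof. exact: Xc_sym. Qed.

Lemma loc_diag l : loc l l = 1.
Proof. by case: l => * /=; rewrite ?eqxx. Qed.

Lemma wE_diag e : wE e e = xE e.
Proof. by rewrite /wE /Xc eqxx loc_diag mulr1. Qed.

Lemma sum_w (a : edge inst -> R) j :
  \sum_i a i * wE j i = xE j * \sum_i a i * Xc (codeE j) (codeE i).
Proof. rewrite mulr_sumr; apply: eq_bigr => i _; rewrite /wE; ring. Qed.

Lemma xE_ge0 e : 0 <= xE e. Proof. exact: xl_ge0. Qed.
Lemma xE_le e : xE e <= th. Proof. exact: xl_le. Qed.

Lemma sa_fam (a : edge inst -> R) (b : R) :
  0 <= b - \sum_i a i * xE i ->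
  (forall j, 0 <= b - \sum_i a i * Xc (codeE j) (codeE i)) ->
  (forall j, xE j * (b - \sum_i a i * Xc (codeE j) (codeE i)) <= b - \sum_i a i * xE i) ->
  sa_constraint 1 (ysa xE wE) a b.
Proof.
move=> H0 H1 H2; apply: (sa1 wE_sym wE_diag) => // j; rewrite sum_w.
- by rewrite -[X in 0 <= X - _]mulrC -mulrBr mulr_ge0 ?xE_ge0.
- by rewrite subr_ge0 -[X in X - _ <= _]mulrC -mulrBr.
Qed.

Lemma ev_src : ev (src inst) = vS.
Proof. exact: enum_rankK. Qed.

Lemma sum_e0 (e0 : edge inst) (F : edge inst -> R) :
  \sum_i ind R (i == e0) * F i = F e0.
Proof.
rewrite (bigD1 e0) //= big1 ?addr0 /ind ?eqxx ?mul1r //.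
by move=> i /negbTE ->; rewrite mul0r.
Qed.

Lemma sa_ok : sa_feasible inst 3 1 (1 : R).
Proof.
exists (ysa xE wE); split.
- split; first exact: ysa0.
  have hs : forall Z : A * lcode -> R,
      - ((kreq inst (src inst))%:R / 1) - \sum_i - ind R (etail i == src inst) * Z (codeE i)
      = outZ Z vS - kr.
    move=> Z; rewrite divr1 /=.
    under eq_bigr => i _ do rewrite mulNr.
    by rewrite sumrN (sum_outZ (src inst) Z) ev_src opprK addrC.
  apply: sa_fam.
  + by rewrite /xE (hs Zx) src_x.
  + move=> j; rewrite (hs (Xc (codeE j))); case/andP: (src_j (codeE j)); have := th_le; lra.
  + move=> j; rewrite (hs (Xc (codeE j))) /xE (hs Zx) src_x; case/andP: (src_j (codeE j)).
    have := xl_le (codeE j).2; have := xl_ge0 (codeE j).2; have := th_le; nra.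
- move=> v nvs nl3.
  have hf : forall Z : A * lcode -> R,
      0 - \sum_i ((kreq inst v)%:R / 1 * ind R (ehead i == v) - ind R (etail i == v)) * Z (codeE i)
      = outZ Z (ev v) - kr * inZ Z (ev v).
    move=> Z; rewrite sub0r divr1 /=.
    under eq_bigr => i _ do rewrite mulrBl -mulrA.
    rewrite sumrB -mulr_sumr (sum_inZ v Z) (sum_outZ v Z) /kr; ring.
  have hv : ev v != vS.
    apply: contra nvs => /eqP h; apply/eqP.
    by rewrite /= -h /ev enum_valK.
  move: nl3 hv hf; rewrite /= /layerV.
  case E : (ev v) => [[[]|a]|[[a i]|[[a i]|[[a k]|i]]]] //= _ _ hf.
  + apply: sa_fam.
    * by rewrite /xE (hf Zx) flowA_x ltW // th_gt0.
    * by move=> j; rewrite (hf (Xc (codeE j))); case: (flowA_j (codeE j) a).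
    * by move=> j; rewrite (hf (Xc (codeE j))) /xE (hf Zx) flowA_x; case: (flowA_j (codeE j) a).
  + apply: sa_fam.
    * by rewrite /xE (hf Zx) flowB_x ltW // th_gt0.
    * by move=> j; rewrite (hf (Xc (codeE j))); case: (flowB_j (codeE j) a i).
    * by move=> j; rewrite (hf (Xc (codeE j))) /xE (hf Zx) flowB_x; case: (flowB_j (codeE j) a i).
- move=> v.
  have hi : forall Z : A * lcode -> R,
      1 - \sum_i ind R (ehead i == v) * Z (codeE i) = 1 - inZ Z (ev v).
    by move=> Z; rewrite (sum_inZ v Z).
  apply: sa_fam.
  + by rewrite /xE (hi Zx); have := in_x (ev v); have := th_le; have := th_gt0; lra.
  + by move=> j; rewrite (hi (Xc (codeE j))); case/andP: (in_bounds (codeE j) (ev v)) => _; lra.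
  + move=> j; rewrite (hi (Xc (codeE j))) /xE (hi Zx).
    have := in_x (ev v); case/andP: (in_bounds (codeE j) (ev v)).
    have := xl_le (codeE j).2; have := xl_ge0 (codeE j).2; nra.
- move=> e0.
  have hb : forall Z : A * lcode -> R,
      0 - \sum_i - ind R (i == e0) * Z (codeE i) = Z (codeE e0).
    move=> Z; under eq_bigr => i _ do rewrite mulNr.
    by rewrite sumrN (sum_e0 e0 (fun i => Z (codeE i))) sub0r opprK.
  apply: sa_fam.
  + by rewrite /xE (hb Zx) xl_ge0.
  + by move=> j; rewrite (hb (Xc (codeE j))) Xc_ge0.
  + move=> j; rewrite (hb (Xc (codeE j))) /xE (hb Zx) Xc_sym.
    have := Xc_le1 (codeE e0) (codeE j); have := xl_ge0 (codeE e0).2; nra.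
- move=> e0.
  have hb : forall Z : A * lcode -> R,
      1 - \sum_i ind R (i == e0) * Z (codeE i) = 1 - Z (codeE e0).
    by move=> Z; rewrite (sum_e0 e0 (fun i => Z (codeE i))).
  apply: sa_fam.
  + by rewrite /xE (hb Zx) subr_ge0 xl_le1.
  + by move=> j; rewrite (hb (Xc (codeE j))) subr_ge0 Xc_le1.
  + move=> j; rewrite (hb (Xc (codeE j))) /xE (hb Zx).
    have := Xc_le1 (codeE j) (codeE e0); have := Xc_ge0 (codeE j) (codeE e0).
    have := xl_le (codeE e0).2; have := xl_le (codeE j).2; have := xl_ge0 (codeE j).2.
    have := th_le; nra.
Qed.

Lemma KK_gt0 : (0 < KK)%N. Proof. by []. Qed.
Definition k0 : Ki := Ordinal KK_gt0.

Lemma ev_rank w : ev (enum_rank w) = w.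
Proof. exact: enum_rankK. Qed.

Lemma rank_ev u : enum_rank (ev u) = u.
Proof. exact: enum_valK. Qed.

Lemma real_ineq (al m s : R) : 1 <= al -> 2 <= kr -> kr / al <= m ->
  m * (kr / al - 1) <= s -> s <= kr -> kr <= 2 * al ^+ 2.
Proof.
move=> h1 h2 hm hs hk.
have al0 : 0 < al by lra.
set t := kr / al in hm hs *.
have ht : t * al = kr by rewrite /t divfK // gt_eqF.
have t0 : 0 < t by rewrite /t divr_gt0 // (lt_le_trans _ h2).
rewrite expr2.
have [t2|t2] := lerP t 2.
  have h : 0 <= al * (2 * al - t) by apply: mulr_ge0; lra.
  nra.
have tm1 : 0 <= t - 1 by lra.
have h1' := ler_wpM2r tm1 hm.
have h2' : m * (t - 1) <= kr by lra.
have h5 : t * t <= 2 * (t * (t - 1)) by nra.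
have h3 : t * t <= 2 * kr by lra.
have h6 : kr * kr = t * t * (al * al) by rewrite -ht; ring.
have aa : 0 <= al * al by apply: mulr_ge0; lra.
have h7 := ler_wpM2r aa h3.
rewrite -h6 in h7.
have kp : 0 < kr by lra.
rewrite -(ler_pM2l kp); apply: (le_trans h7); rewrite [2 * kr]mulrC -mulrA.
done.
Qed.

Lemma int_lb (al : R) (T : {set edge inst}) :
  1 <= al -> int_sol inst 3 al T -> kr <= 2 * al ^+ 2.
Proof.
move=> hal [hs hin hout].
have al0 : 0 < al by lra.
have kpos : 0 < kr / al by rewrite divr_gt0 // kr_gt0.
have hinj : {in T &, injective (@ehead inst)}.
  move=> e1 e2 h1 h2 he; have := hin (ehead e1).
  move/card_le1_eqP; apply; rewrite !inE ?h1 ?h2 ?he ?eqxx //.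
have : (0 < #|outT T (src inst)|)%N.
  by rewrite -(ltr0n R); apply: lt_le_trans kpos hs.
case/card_gt0P => e0; rewrite inE => /andP [e0T /eqP e0t].
have hadj0 : adjV (ev (etail e0)) (ev (ehead e0)) := valP e0.
rewrite e0t ev_src in hadj0.
set u := ehead e0 in hadj0.
case Eu : (ev u) hadj0 => [[[]|a]|[[a' i]|[[a' i]|[[a' k]|i]]]] //= _.
have hu1 : #|inT T u| = 1%N.
  apply/eqP; rewrite eqn_leq hin /= card_gt0; apply/set0Pn; exists e0.
  by rewrite inE e0T eqxx.
have hu_ns : u != src inst.
  by apply/eqP => h; move: Eu; rewrite h ev_src.
have hu_l : layer inst u != 3%N by rewrite /= /layerV Eu.
have hm := hout u hu_ns hu_l hu1.
set B := (@ehead inst) @: outT T u.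
have hB : #|B| = #|outT T u|.
  by apply: card_in_imset => e1 e2; rewrite !inE => /andP[h1 _] /andP[h2 _]; apply: hinj.
have hBv : forall b, b \in B -> exists i, ev b = vB a i /\ (kr / al <= #|outT T b|%:R).
  move=> b /imsetP [e he ->]; move: he; rewrite inE => /andP [eT /eqP et].
  have hadj : adjV (ev (etail e)) (ev (ehead e)) := valP e.
  rewrite et Eu in hadj.
  case Eb : (ev (ehead e)) hadj => [[[]|a2]|[[a2 i]|[[a2 i]|[[a2 k]|i]]]] //= /eqP ea.
  subst a2; exists i; split => //.
  apply: hout.
  - by apply/eqP => h; move: Eb; rewrite h ev_src.
  - by rewrite /= /layerV Eb.
  - apply/eqP; rewrite eqn_leq hin /= card_gt0; apply/set0Pn; exists e.
    by rewrite inE eT eqxx.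
pose isXa (w : V) := match kind w with KX a2 _ => a2 == a | _ => false end.
pose kidx (e : edge inst) := match kind (ev (ehead e)) with KX _ k => k | _ => k0 end.
set S := [set e in T | (etail e \in B) && isXa (ev (ehead e))].
have hS : (#|S| <= KK)%N.
  rewrite -(card_in_imset (f := kidx)); first by rewrite -[X in (_ <= X)%N]card_ord max_card.
  move=> e1 e2; rewrite !inE => /and3P [h1 _ x1] /and3P [h2 _ x2].
  rewrite /kidx /isXa in x1 x2 *.
  case E1 : (ev (ehead e1)) x1 => [[[]|?]|[[? ?]|[[? ?]|[[a1 k1]|?]]]] //= /eqP ?.
  case E2 : (ev (ehead e2)) x2 => [[[]|?]|[[? ?]|[[? ?]|[[a2 k2]|?]]]] //= /eqP ? hk.
  subst; apply: hinj => //; apply: ev_inj; by rewrite E1 E2.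
have hpart : #|S| = (\sum_(b in B) #|[set e in S | etail e == b]|)%N.
  rewrite -sum1_card (partition_big (@etail inst) (mem B)) /=; last first.
    by move=> e; rewrite inE => /and3P [].
  by apply: eq_bigr => b _; rewrite sum1dep_card.
have hb : forall b, b \in B -> (#|outT T b| <= #|[set e in S | etail e == b]| + 1)%N.
  move=> b bB; have [i [Eb _]] := hBv b bB.
  pose pv := enum_rank (vP a i).
  have sub : outT T b \subset [set e in S | etail e == b] :|: inT T pv.
    apply/subsetP => e; rewrite !inE => /andP [eT /eqP et].
    have hadj : adjV (ev (etail e)) (ev (ehead e)) := valP e.
    rewrite et Eb in hadj.
    case E2 : (ev (ehead e)) hadj => [[[]|?]|[[? ?]|[[a2 i2]|[[a2 k2]|?]]]] //=.
    - case/andP => /eqP ea /eqP ei; subst.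
      by apply/orP; right; rewrite /pv -(rank_ev (ehead e)) E2 eT /=; apply/eqP.
    - move=> /eqP ea; subst.
      by apply/orP; left; rewrite eT bB /= /isXa /= !eqxx.
  apply: leq_trans (subset_leq_card sub) _.
  by rewrite cardsU (leq_trans (leq_subr _ _)) // leq_add2l hin.
apply: (real_ineq (m := #|outT T u|%:R) (s := #|S|%:R)) => //.
- exact: kr_ge2.
- rewrite hpart natr_sum -hB.
  have -> : #|B|%:R * (kr / al - 1) = \sum_(b in B) (kr / al - 1).
    by rewrite sumr_const mulr_natl.
  apply: ler_sum => b bB.
  have [i [_ h1]] := hBv b bB.
  have h2 := hb b bB; rewrite -(ler_nat R) natrD in h2.
  lra.
- by rewrite ler_nat.
Qed.

Lemma inst_layered : layered inst 3.
Proof.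
split.
- split; first by rewrite /= ev_src.
  move=> v /=; rewrite /layerV; case E : (ev v) => [[[]|?]|[[? ?]|[[? ?]|[[? ?]|?]]]] //= _.
  by rewrite -(rank_ev v) E.
- by move=> v /=; rewrite /layerV; case: (kind (ev v)).
- move=> i hi; case: i hi => [|[|[|[|i]]]] // _.
  + by exists (src inst); rewrite /= ev_src.
  + by exists (enum_rank (vA a0)); rewrite /= /layerV ev_rank.
  + by exists (enum_rank (vB a0 i0)); rewrite /= /layerV ev_rank.
  + by exists (enum_rank (vP a0 i0)); rewrite /= /layerV ev_rank.
- move=> u v /=; rewrite /layerV /adjV.
  by case: (ev u) => [[[]|?]|[[? ?]|[[? ?]|[[? ?]|?]]]];
     case: (ev v) => [[[]|?]|[[? ?]|[[? ?]|[[? ?]|?]]]].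
- by [].
Qed.

Lemma card_V : #|{: V}| = (1 + NA + (NA * MM + (NA * MM + (NA * KK + pad))))%N.
Proof. by rewrite !card_sum card_unit !card_prod !card_ord. Qed.

End Inst.

Unset Implicit Arguments.

Lemma final_ineq (R : realFieldType) (al k n : R) :
  8 <= k -> k <= 2 * al ^+ 2 -> n <= k ^+ 5 -> n <= (al / 1) ^+ 20.
Proof.
move=> k8 hk hn.
set w := k / 2.
have ek : k = 2 * w by rewrite /w; field.
have w4 : 4 <= w by lra.
have hw : w <= al ^+ 2 by lra.
have w0 : 0 <= w by lra.
have u1 : w ^+ 5 <= (al ^+ 2) ^+ 5.
  by apply: lerXn2r; rewrite ?nnegrE ?sqr_ge0.
have u2 : 4 ^+ 5 <= w ^+ 5 by apply: lerXn2r; rewrite ?nnegrE //; lra.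
have e1 : k ^+ 5 = 32 * w ^+ 5 by rewrite ek exprMn; congr (_ * _); rewrite -natrX.
have e2 : (al / 1) ^+ 20 = (al ^+ 2) ^+ 5 * (al ^+ 2) ^+ 5.
  by rewrite divr1 -exprD -exprM.
rewrite e2; rewrite e1 in hn.
move: u1 u2 hn; set u := w ^+ 5; set v := (al ^+ 2) ^+ 5.
have -> : (4 : R) ^+ 5 = 1024 by rewrite -natrX.
move=> *; nra.
Qed.

Lemma base_le (j : nat) : (6 <= j)%N ->
  (1 + NA j + (NA j * MM j + (NA j * MM j + NA j * KK j)) <= (j.+1 ^ 5).+1)%N.
Proof.
move=> hj; rewrite /NA /MM /KK.
have -> : j = (j - 6 + 6)%N by lia.
move: (j - 6)%N => j'.
rewrite !expnS expn0 muln1; nia.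
Qed.

Theorem theorem1 (R : realType) :
  exists (c1 c2 p q n0 : nat),
    [/\ (0 < c1)%N, (0 < c2)%N, (0 < p)%N & (0 < q)%N] /\
    forall n : nat, (n0 <= n)%N ->
      exists I : mmda_inst,
        [/\ layered I 3,
            (n <= c1 * nv I)%N /\ (nv I <= c2 * n)%N,
            (forall u, (layer I u < 3)%N -> (n <= kreq I u ^ p)%N)
          & exists beta : R, 0 < beta /\ sa_feasible I 3 1 beta /\
              forall alpha : R, 1 <= alpha ->
                (exists T, int_sol I 3 alpha T) ->
                n%:R <= (alpha / beta) ^+ q].
Proof.
exists 1%N, 1%N, 5%N, 20%N, 16808%N; split => // n hn.
have exP : exists k, (n <= k ^ 5)%N.
  by exists n; rewrite expnS leq_pmulr // expn_gt0; case: n hn.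
case: (ex_minnP exP) => K hK hmin.
have K8 : (8 <= K)%N.
  rewrite leqNgt; apply/negP => hK7.
  have h7 : (K ^ 5 <= 7 ^ 5)%N by rewrite leq_exp2r // -ltnS.
  by have := leq_trans (leq_trans hn hK) h7.
have hlow : ((K - 1) ^ 5 < n)%N.
  rewrite ltnNge; apply/negP => h; have := hmin _ h; lia.
pose k' := (K - 2)%N.
have eK : K = k'.+2 by rewrite /k'; lia.
pose base := (1 + NA k' + (NA k' * MM k' + (NA k' * MM k' + NA k' * KK k')))%N.
have hbase : (base <= n)%N.
  apply: leq_trans hlow; rewrite /base.
  have -> : (K - 1 = k'.+1)%N by rewrite eK; lia.
  by apply: base_le; rewrite /k'; lia.
pose pad := (n - base)%N.
have hcard : nv (inst k' pad) = n.
  rewrite /= card_V /pad /base; lia.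
exists (inst k' pad); split.
- exact: inst_layered.
- by rewrite hcard mul1n; split.
- by move=> u _; rewrite /= /KK -eK.
- exists 1; split; first exact: ltr01.
  split; first exact: sa_ok.
  move=> al hal [T hT].
  have h := int_lb hal hT.
  apply: (final_ineq _ _ _ _ _ h).
  + by rewrite /kr /KK -eK (ler_nat R 8 K).
  + by rewrite /kr /KK -eK -natrX ler_nat.
Qed.
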